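(* Let $\mathbb{K}$ be a field of characteristic zero, $p,q\in\mathbb{Z}^n_{\ge0}$ and $\beta,\gamma\in\mathbb{K}^n$. For any integer $d\ge1$, $$(\mathrm{ad}\,\Delta^q_\gamma)^d(\Delta^p_\beta)=s_d\,\Delta^{p+dq}_{\omega_d},$$ where $s_1=1$, $s_d=\prod_{i=0}^{d-2}\langle\gamma,p+iq\rangle$ for $d>1$, and $\omega_d=\langle\gamma,p+(d-1)q\rangle\beta-d\langle\beta,q\rangle\gamma$.
   Context: For $p\in\mathbb{Z}^n_{\ge0}$ and $\beta\in\mathbb{K}^n$, $\Delta^p_\beta:=x_1^{p_1}\cdots x_n^{p_n}\sum_{j=1}^n\beta_jx_j\partial_j$ (a derivation of $\mathbb{K}[x_1,\ldots,x_n]$, $\partial_j=\partial/\partial x_j$). $\langle\beta,u\rangle:=\sum_i\beta_iu_i$. $(\mathrm{ad}\,X)(Y)=[X,Y]=X\circ Y-Y\circ X$. *)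

(* Defs.v *)
From HB Require Import structures.
From mathcomp Require Import all_boot all_order all_algebra.
From mathcomp Require Import mpoly.
Set Implicit Arguments. Unset Strict Implicit. Unset Printing Implicit Defensive.
Import GRing.Theory.
Local Open Scope ring_scope.

Definition pairing (K : fieldType) (n : nat) (beta : 'I_n -> K) (u : 'I_n -> nat) : K :=
  \sum_(i < n) beta i * (u i)%:R.

Definition xmon (K : fieldType) (n : nat) (p : 'I_n -> nat) : {mpoly K[n]} :=
  \prod_(i < n) 'X_i ^+ p i.

Definition Delta (K : fieldType) (n : nat) (p : 'I_n -> nat) (beta : 'I_n -> K)
  (f : {mpoly K[n]}) : {mpoly K[n]} :=
  xmon K p * \sum_(j < n) (beta j *: ('X_j * mderiv j f)).

Definition ad (K : fieldType) (n : nat) (X Y : {mpoly K[n]} -> {mpoly K[n]}) :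
  {mpoly K[n]} -> {mpoly K[n]} := fun f => X (Y f) - Y (X f).

Definition mi_add (n : nat) (p q : 'I_n -> nat) : 'I_n -> nat := fun i => (p i + q i)%N.
Definition mi_scale (n : nat) (d : nat) (q : 'I_n -> nat) : 'I_n -> nat := fun i => (d * q i)%N.

(* Main.v *)
Require Import Defs.
From HB Require Import structures.
From mathcomp Require Import all_boot all_order all_algebra.
From mathcomp Require Import mpoly.
From mathcomp Require Import ring.
Import GRing.Theory.
Local Open Scope ring_scope.

Section S.
Variables (K : fieldType) (n : nat).

Definition mn (p : 'I_n -> nat) : 'X_{1..n} := [multinom p i | i < n].

Lemma xmonE (p : 'I_n -> nat) : xmon K p = 'X_[mn p].
Proof. by rewrite mpolyXE_id /xmon; apply: eq_bigr => i _; rewrite /mn mnmE. Qed.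

Lemma XmderivX j (m : 'X_{1..n}) :
  'X_j * mderiv j ('X_[m] : {mpoly K[n]}) = (m j)%:R *: 'X_[m].
Proof.
rewrite mderivX -scalerAr.
case: (posnP (m j)) => [->|hp]; first by rewrite !scale0r.
congr (_ *: _); rewrite -mpolyXD; congr 'X_[_]; apply/mnmP => i.
rewrite mnmDE mnmBE mnm1E; case: eqP => [<-|_]; last by rewrite subn0.
by rewrite add1n subn1 prednK.
Qed.

Lemma Delta_X (p : 'I_n -> nat) (b : 'I_n -> K) (m : 'X_{1..n}) :
  Delta p b 'X_[m] = pairing b (fun i => m i) *: 'X_[mn p + m].
Proof.
rewrite /Delta xmonE mpolyXD scalerAr; congr (_ * _).
rewrite /pairing scaler_suml; apply: eq_bigr => j _.
by rewrite XmderivX scalerA.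
Qed.

Lemma Delta_lin (p : 'I_n -> nat) (b : 'I_n -> K) (c : K) (f g : {mpoly K[n]}) : Delta p b (c *: f + g) = c *: Delta p b f + Delta p b g.
Proof.
rewrite /Delta scalerAr -mulrDr; congr (_ * _).
rewrite scaler_sumr -big_split; apply: eq_bigr => j _ /=.
by rewrite mderivD mderivZ mulrDr -scalerAr !scalerDr !scalerA mulrC.
Qed.

Lemma Delta0 (p : 'I_n -> nat) (b : 'I_n -> K) : Delta p b 0 = 0.
Proof. by rewrite /Delta big1 ?mulr0 // => j _; rewrite mderiv0 mulr0 scaler0. Qed.

Lemma pairingD (b : 'I_n -> K) (u v : 'I_n -> nat) :
  pairing b (fun i => (u i + v i)%N) = pairing b u + pairing b v.
Proof. by rewrite /pairing -big_split; apply: eq_bigr => i _; rewrite natrD mulrDr. Qed.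

Lemma comm_X (q p : 'I_n -> nat) (g w : 'I_n -> K) (m : 'X_{1..n}) :
  Delta q g (Delta p w 'X_[m]) - Delta p w (Delta q g 'X_[m])
  = Delta (mi_add p q) (fun j => pairing g p * w j - pairing w q * g j) 'X_[m].
Proof.
have e : forall c (f : {mpoly K[n]}) p b, Delta p b (c *: f) = c *: Delta p b f.
  by move=> c f p0 b; rewrite -[c *: f]addr0 Delta_lin Delta0 addr0.
rewrite !Delta_X !e !Delta_X !scalerA.
have -> : (mn q + (mn p + m))%MM = (mn (mi_add p q) + m)%MM.
  by apply/mnmP => i; rewrite !mnmDE /mn !mnmE /mi_add addnA [(q i + _)%N]addnC.
have -> : (mn p + (mn q + m))%MM = (mn (mi_add p q) + m)%MM.
  by apply/mnmP => i; rewrite !mnmDE /mn !mnmE /mi_add addnA.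
rewrite -scalerBl; congr (_ *: _).

have h1 : pairing g (fun i => (mn p + m)%MM i) = pairing g p + pairing g (fun i => m i).
  by rewrite -pairingD; apply: eq_bigr => i _; rewrite mnmDE /mn mnmE.
have h2 : pairing w (fun i => (mn q + m)%MM i) = pairing w q + pairing w (fun i => m i).
  by rewrite -pairingD; apply: eq_bigr => i _; rewrite mnmDE /mn mnmE.
have h5 : forall a b (u : 'I_n -> nat), pairing (fun j => a * w j - b * g j) u
   = a * pairing w u - b * pairing g u.
  move=> a b u; rewrite /pairing !big_distrr -sumrB; apply: eq_bigr => i _.
  by rewrite mulrBl -!mulrA.
rewrite h1 h2 h5.
ring.
Qed.


Lemma DeltaZ (p : 'I_n -> nat) (b : 'I_n -> K) c f : Delta p b (c *: f) = c *: Delta p b f.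
Proof. by rewrite -[c *: f]addr0 Delta_lin Delta0 addr0. Qed.

Lemma comm (q p : 'I_n -> nat) (g w : 'I_n -> K) f :
  Delta q g (Delta p w f) - Delta p w (Delta q g f)
  = Delta (mi_add p q) (fun j => pairing g p * w j - pairing w q * g j) f.
Proof.
elim/mpolyind: f => [|c m f _ _ IH]; first by rewrite !Delta0 subrr.
rewrite !Delta_lin -IH -comm_X.
by rewrite scalerBr addrACA opprD.
Qed.

Lemma Delta_ext (p p' : 'I_n -> nat) (w w' : 'I_n -> K) c f :
  (forall i, p i = p' i) -> (forall j, w j = c * w' j) ->
  Delta p w f = c *: Delta p' w' f.
Proof.
move=> hp hw; rewrite /Delta scalerAr; congr (_ * _).
  by apply: eq_bigr => i _; rewrite hp.
by rewrite scaler_sumr; apply: eq_bigr => j _; rewrite hw scalerA.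
Qed.

Lemma pairingC (w g : 'I_n -> K) a b (u : 'I_n -> nat) :
  pairing (fun j => a * w j - b * g j) u = a * pairing w u - b * pairing g u.
Proof.
rewrite /pairing !big_distrr -sumrB; apply: eq_bigr => i _.
by rewrite mulrBl -!mulrA.
Qed.

Lemma pairing_pdq (g : 'I_n -> K) p q k :
  pairing g (mi_add p (mi_scale k q)) = pairing g p + k%:R * pairing g q.
Proof.
rewrite /pairing big_distrr -big_split; apply: eq_bigr => i _ /=.
by rewrite /mi_add /mi_scale natrD natrM; ring.
Qed.

End S.

Theorem lemma8 (K : fieldType) (n : nat) (charK0 : [pchar K] =i pred0)
  (p q : 'I_n -> nat) (beta gamma : 'I_n -> K) (d : nat) (hd : (1 <= d)%N) :
  let s_d : K := \prod_(i < d.-1) pairing gamma (mi_add p (mi_scale i q)) in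
  let omega_d : 'I_n -> K := fun j =>
    pairing gamma (mi_add p (mi_scale d.-1 q)) * beta j
    - d%:R * pairing beta q * gamma j in
  forall f : {mpoly K[n]},
    iter d (ad (Delta q gamma)) (Delta p beta) f
    = s_d *: Delta (mi_add p (mi_scale d q)) omega_d f.
Proof.
move=> s_d omega_d; rewrite /s_d /omega_d {s_d omega_d}.
case: d hd => // d _ /=.
elim: d => [|d IH] f.
  rewrite /= /ad comm big_ord0 scale1r; rewrite -[RHS]scale1r; apply: Delta_ext => [i|j].
    by rewrite /mi_add /mi_scale mul1n.
  by rewrite pairing_pdq mul0r addr0 !mul1r.
rewrite {1}/ad /= !IH DeltaZ -scalerBr comm.
rewrite big_ord_recr /= -scalerA; congr (_ *: _).
apply: Delta_ext => [i|j].
  by rewrite /mi_add /mi_scale [(d.+2 * _)%N]mulSn addnA [(_ + q i)%N]addnC addnA [(q i + _)%N]addnC.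
rewrite pairingC !pairing_pdq.
ring.
Qed.
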